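(* Let $V$ be a vertex algebra. The following are equivalent: (1) there exists a $V$-module $W$ with $g(V)_{\ge0}W\ne W$; (2) $g(V)_{\ge0}V\ne V$; (3) $\mathbf 1\notin g(V)_{\ge0}V$.
   Context: $(V,Y,\mathbf 1)$ is a vertex algebra; a $V$-module is a module for $V$ as a vertex algebra (no grading assumed). For a $V$-module $W$, $g(V)_{\ge0}W=\mathrm{span}\{v_nw\mid v\in V,\ n\ge0,\ w\in W\}$, where $Y_W(v,x)=\sum_nv_nx^{-n-1}$; $V$ is regarded as a module over itself. *)

(* Defs.v *)
From mathcomp Require Import all_boot all_algebra all_reals.
From mathcomp Require Import complex.
Set Implicit Arguments. Unset Strict Implicit. Unset Printing Implicit Defensive.
Import GRing.Theory Num.Theory.
Local Open Scope ring_scope.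

Definition binz (a : int) (i : nat) : int :=
  match a with
  | Posz n => ('C(n, i))%:Z
  | Negz n => (-1) ^+ i * ('C(n + i, i))%:Z   (* Negz n = -(n+1) *)
  end.

Section VA.
Variable K : fieldType.

(* Borcherds (Jacobi) identity in component form, for YV the vertex operator
   of V (u_n v = YV n u v) and YW the action on W (u_n w = YW n u w):
   sum_{i>=0} binom(m,i) (u_{l+i} v)_{m+n-i} w
     = sum_{i>=0} (-1)^i binom(l,i) ( u_{l+m-i} v_{n+i} w
                                      - (-1)^l v_{l+n-i} u_{m+i} w ).
   The (finitely supported) series are truncated at any K0 beyond which all
   terms vanish. *)
Definition borcherds (V W : lmodType K)
    (YV : int -> V -> V -> V) (YW : int -> V -> W -> W) : Prop :=
  forall (u v : V) (w : W) (m n l : int) (K0 : nat),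
    (forall i : nat, (K0 <= i)%N ->
       [/\ YV (l + i%:Z) u v = 0, YW (n + i%:Z) v w = 0 & YW (m + i%:Z) u w = 0]) ->
    \sum_(i < K0) ((binz m i)%:~R *: YW (m + n - i%:Z) (YV (l + i%:Z) u v) w)
    = \sum_(i < K0) (((-1) ^+ i * (binz l i)%:~R) *:
          (YW (l + m - i%:Z) u (YW (n + i%:Z) v w)
           - ((-1 : K) ^ l) *: YW (l + n - i%:Z) v (YW (m + i%:Z) u w))).

Definition bilinear_modes (V W : lmodType K) (Y : int -> V -> W -> W) : Prop :=
  forall n : int,
    (forall (a : K) (u u' : V) (w : W), Y n (a *: u + u') w = a *: Y n u w + Y n u' w)
    /\ (forall (a : K) (u : V) (w w' : W), Y n u (a *: w + w') = a *: Y n u w + Y n u w').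

Definition truncated (V W : lmodType K) (Y : int -> V -> W -> W) : Prop :=
  forall (u : V) (w : W), exists N : int, forall n : int, N <= n -> Y n u w = 0.

(* A vertex algebra (V, Y, 1); Y(v,x) = sum_n v_n x^{-n-1}, v_n = va_Y n v. *)
Record vertex_algebra (V : lmodType K) := VertexAlgebra {
  va_Y : int -> V -> V -> V;
  va_vac : V;
  va_bilinear : bilinear_modes va_Y;
  va_truncation : truncated va_Y;
  va_vacuum : forall (n : int) (v : V), va_Y n va_vac v = (if n == -1 then v else 0);
  va_creation : forall v : V, va_Y (-1) v va_vac = v /\
                 (forall n : int, 0 <= n -> va_Y n v va_vac = 0);
  va_jacobi : borcherds va_Y va_Y
}.

Record va_module (V : lmodType K) (A : vertex_algebra V) (W : lmodType K) :=
  VAModule {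
  mod_Y : int -> V -> W -> W;
  mod_bilinear : bilinear_modes mod_Y;
  mod_truncation : truncated mod_Y;
  mod_vacuum : forall (n : int) (w : W), mod_Y n (va_vac A) w = (if n == -1 then w else 0);
  mod_jacobi : borcherds (va_Y A) mod_Y
}.

Definition in_gpos (V W : lmodType K) (Y : int -> V -> W -> W) (x : W) : Prop :=
  exists s : seq (K * int * V * W),
    all (fun t => 0 <= t.1.1.2) s /\
    x = \sum_(t <- s) (t.1.1.1 *: Y t.1.1.2 t.1.2 t.2).

End VA.

(* Main.v *)
Require Import Defs.
From mathcomp Require Import all_boot all_algebra all_reals.
From mathcomp Require Import complex.
From mathcomp Require Import zify.
Import GRing.Theory Num.Theory.
Local Open Scope ring_scope.

Section Aux.
Variable K : fieldType.
Variables (V W : lmodType K).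
Variable YW : int -> V -> W -> W.

Lemma in_gpos0 : in_gpos YW 0.
Proof. by exists [::]; rewrite big_nil. Qed.

Lemma in_gposD x y : in_gpos YW x -> in_gpos YW y -> in_gpos YW (x + y).
Proof.
move=> [s [hs ->]] [t [ht ->]]; exists (s ++ t); split.
  by rewrite all_cat hs ht.
by rewrite big_cat.
Qed.

Lemma in_gposZ a x : in_gpos YW x -> in_gpos YW (a *: x).
Proof.
move=> [s [hs ->]].
exists [seq (a * t.1.1.1, t.1.1.2, t.1.2, t.2) | t <- s]; split.
  by rewrite all_map; apply: sub_all hs => t.
rewrite big_map scaler_sumr; apply: eq_bigr => t _; by rewrite scalerA.
Qed.

Lemma in_gposB x y : in_gpos YW x -> in_gpos YW y -> in_gpos YW (x - y).
Proof.
move=> hx hy; apply: in_gposD => //; rewrite -scaleN1r; exact: in_gposZ.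
Qed.

Lemma in_gpos1 n u w : 0 <= n -> in_gpos YW (YW n u w).
Proof.
move=> hn; exists [:: (1, n, u, w)]; split; first by rewrite /= hn.
by rewrite big_cons big_nil scale1r addr0.
Qed.

Lemma in_gpos_sum (k : nat) (F : 'I_k -> W) :
  (forall i, in_gpos YW (F i)) -> in_gpos YW (\sum_(i < k) F i).
Proof.
move=> h; apply: (big_ind (in_gpos YW)) => //.
  exact: in_gpos0.
move=> x y; exact: in_gposD.
Qed.

Hypothesis Ybil : bilinear_modes YW.

Lemma Y0l n w : YW n 0 w = 0.
Proof.
have := (Ybil n).1 1 0 0 w; rewrite !scale1r !addr0 => E.
by have := congr1 (fun x => x - YW n 0 w) E; rewrite /= addrK subrr => <-.
Qed.

Lemma Y0r n u : YW n u 0 = 0.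
Proof.
have := (Ybil n).2 1 u 0 0; rewrite !scale1r !addr0 => E.
by have := congr1 (fun x => x - YW n u 0) E; rewrite /= addrK subrr => <-.
Qed.

Lemma Yl_sum n w (T : Type) (s : seq T) (c : T -> K) (f : T -> V) :
  YW n (\sum_(t <- s) (c t *: f t)) w = \sum_(t <- s) (c t *: YW n (f t) w).
Proof.
elim: s => [|t s IH]; first by rewrite !big_nil Y0l.
by rewrite !big_cons (Ybil n).1 IH.
Qed.

End Aux.

Section Main.
Variable K : fieldType.
Variables (V W : lmodType K) (A : vertex_algebra V).
Variable YW : int -> V -> W -> W.
Hypotheses (Ybil : bilinear_modes YW) (Ytr : truncated YW)
  (Yjac : borcherds (va_Y A) YW).

Lemma claim u v : forall (n : int), 0 <= n -> forall k w,
  in_gpos YW (YW k (va_Y A n u v) w).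
Proof.
have [N' HN'] := va_truncation A u v.
suff H : forall d : nat, forall n : int, 0 <= n -> N' - n <= d%:Z ->
  forall k w, in_gpos YW (YW k (va_Y A n u v) w).
  move=> n hn; apply: (H `|N' - n|%N n hn); lia.
elim=> [|d IH] n hn hd k w.
  rewrite HN'; last by lia.
  rewrite Y0l //; exact: in_gpos0.
have [N HN] := Ytr u w.
have [Nv HNv] := Ytr v w.
set m : int := Posz `|N|%N.
set p : int := k - m.
set K0 : nat := (`|N' - n| + `|Nv - p|).+1%N.
have := Yjac u v w m p n K0.
have hyp : forall i : nat, (K0 <= i)%N ->
  [/\ va_Y A (n + i%:Z) u v = 0, YW (p + i%:Z) v w = 0 & YW (m + i%:Z) u w = 0].
  move=> i hi; split.
  - apply: HN'; rewrite /K0 in hi; lia.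
  - apply: HNv; rewrite /K0 in hi; lia.
  - apply: HN; rewrite /m; lia.
move=> /(_ hyp) E; rewrite big_ord_recl in E.
have b0 : binz m 0 = 1 by rewrite /m /= bin0.
have mp : m + p = k by rewrite /p addrC subrK.
rewrite b0 /= subr0 addr0 mp scale1r in E.
rewrite (canRL (addrK _) E).
apply: in_gposB.
  apply: in_gpos_sum => i.
  rewrite HN; last by rewrite /m; lia.
  rewrite Y0r // scaler0 subr0.
  have [hi|hi] := boolP (i%:Z <= n).
    apply: in_gposZ; apply: in_gpos1; rewrite /m; lia.
  have -> : binz n i = 0.
    have [n0 en] : exists n0 : nat, n = n0 by exists `|n|%N; lia.
    rewrite en /= bin_small //; lia.
  rewrite mulr0 scale0r; exact: in_gpos0.
apply: in_gpos_sum => i; apply: in_gposZ; apply: IH.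
  lia.
rewrite /bump /=; lia.
Qed.

End Main.

Lemma all_gpos (K : fieldType) (V W : lmodType K) (A : vertex_algebra V)
  (YW : int -> V -> W -> W) :
  bilinear_modes YW -> truncated YW -> borcherds (va_Y A) YW ->
  (forall w, YW (-1) (va_vac A) w = w) ->
  in_gpos (va_Y A) (va_vac A) -> forall w, in_gpos YW w.
Proof.
move=> hb ht hj hvac hv w.
rewrite -(hvac w).
case: hv => s [hs ->].
rewrite (@Yl_sum _ _ _ _ hb).
elim: s hs => [|t s IH] /=; first by move=> _; rewrite big_nil; exact: in_gpos0.
move=> /andP [h1 h2]; rewrite big_cons; apply: in_gposD; last exact: IH.
apply: in_gposZ; exact: (@claim _ _ _ _ _ hb ht hj _ _ _ h1).
Qed.

Theorem mainTheorem9 (R : realType) (V : lmodType R[i])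
    (A : vertex_algebra V) :
  [<-> (exists (W : lmodType R[i]) (M : va_module A W) (w : W),
          ~ in_gpos (mod_Y M) w);
       (exists v : V, ~ in_gpos (va_Y A) v);
       ~ in_gpos (va_Y A) (va_vac A)].
Proof.
tfae.
- move=> [W [M [w hw]]]; exists (va_vac A) => hv; apply: hw.
  refine (@all_gpos _ _ _ A (mod_Y M) (mod_bilinear M) (mod_truncation M) (@mod_jacobi _ _ _ _ M) _ hv w).
  by move=> x; rewrite mod_vacuum.
- move=> [v hv] hvac; apply: hv.
  apply: (@all_gpos _ _ _ A (va_Y A) (va_bilinear A) (va_truncation A) (@va_jacobi _ _ A)) => //.
  by move=> x; rewrite va_vacuum.
- move=> h; exists V, (@VAModule _ _ A V (va_Y A) (va_bilinear A) (va_truncation A)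
    (va_vacuum A) (@va_jacobi _ _ A)), (va_vac A); exact: h.
Qed.
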